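(* If $\deg(e)\ge 3$ (where $e$ is the base of the natural logarithm, and $\deg(e)=\infty$ is allowed), then $e+\pi$ is a transcendental number.
   Context: Let $\overline{\mathbb{Q}}$ denote the field of algebraic numbers. For $n\ge 1$, an admissible domain in $\mathbb{R}^n$ is a subset of $\mathbb{R}^n$ which is a finite union of sets of the form $\{x\in\mathbb{R}^n : P_1(x)\,\square_1\, 0,\dots,P_r(x)\,\square_r\, 0\}$, where each $P_i$ is a polynomial with real algebraic coefficients and each $\square_i\in\{\ge,>\}$, and which has finite Lebesgue measure $\mathrm{vol}_n$. A real number $p$ is a real period if $p=\mathrm{vol}_n(\Sigma_1)-\mathrm{vol}_n(\Sigma_2)$ for some $n\ge1$ and admissible domains $\Sigma_1,\Sigma_2\subseteq\mathbb{R}^n$. The degree is defined as follows: $\deg(0)=0$; for a nonzero real period $p$, $\deg(p)$ is the least $n\ge 1$ such that $p=\mathrm{vol}_n(\Sigma_1)-\mathrm{vol}_n(\Sigma_2)$ with $\Sigma_1,\Sigma_2$ admissible domains in $\mathbb{R}^n$; for a real number that is not a period, $\deg(p)=\infty$, with $\infty$ larger than every integer. *)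

(* Defs.v *)
From Stdlib Require Import Reals List ZArith.
Import ListNotations.
Open Scope R_scope.

(** Real algebraic numbers: roots of a nonzero polynomial with integer
    coefficients.  A polynomial is the list of its coefficients
    [c0; c1; ...; cd] (constant term first). *)
Definition zpoly_eval (p : list Z) (x : R) : R :=
  fold_right (fun c acc => IZR c + x * acc) 0 p.

Definition is_algebraic (x : R) : Prop :=
  exists p : list Z, Exists (fun c => c <> 0%Z) p /\ zpoly_eval p x = 0.

Definition transcendental (x : R) : Prop := ~ is_algebraic x.

(** Points of R^n are lists of reals of length n. *)

(** Multivariate real polynomials: lists of monomials (coefficient,
    exponent vector); the monomial (c, [e1;...;ek]) evaluates at x to
    c * x1^e1 * ... * xk^ek (pairing coordinates and exponents
    positionally; missing exponents count as 0). *)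
Definition mpoly := list (R * list nat).

Definition monom_eval (e : list nat) (x : list R) : R :=
  fold_right (fun ye acc => (fst ye) ^ (snd ye) * acc) 1 (combine x e).

Definition mpoly_eval (P : mpoly) (x : list R) : R :=
  fold_right (fun m acc => fst m * monom_eval (snd m) x + acc) 0 P.

Definition mpoly_alg_coeffs (P : mpoly) : Prop :=
  Forall (fun m => is_algebraic (fst m)) P.

Definition sign_cond := (mpoly * bool)%type.

Definition sat_cond (c : sign_cond) (x : list R) : Prop :=
  if snd c then mpoly_eval (fst c) x >= 0 else mpoly_eval (fst c) x > 0.

(** A basic set {x in R^n : P_1(x) []_1 0, ..., P_r(x) []_r 0}. *)
Definition basic_set := list sign_cond.

Definition in_union (n : nat) (U : list basic_set) (x : list R) : Prop :=
  length x = n /\ Exists (fun B => Forall (fun c => sat_cond c x) B) U.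

Definition alg_union (U : list basic_set) : Prop :=
  Forall (fun B => Forall (fun c => mpoly_alg_coeffs (fst c)) B) U.

(** Lebesgue measure, via Lebesgue outer measure (which coincides with
    Lebesgue measure on the Borel, in particular semialgebraic, sets):
    the infimum of sum_k vol(B_k) over countable covers by closed boxes. *)
Definition box := list (R * R).  (* list of intervals [a_i, b_i] *)

Definition box_ok (n : nat) (b : box) : Prop :=
  length b = n /\ Forall (fun ab => fst ab <= snd ab) b.

Definition in_box (b : box) (x : list R) : Prop :=
  Forall2 (fun ab y => fst ab <= y <= snd ab) b x.

Definition box_vol (b : box) : R :=
  fold_right (fun ab acc => (snd ab - fst ab) * acc) 1 b.

Definition cover_sum (n : nat) (S : list R -> Prop) (s : R) : Prop :=
  exists B : nat -> box,
    (forall k, box_ok n (B k)) /\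
    (forall x, length x = n -> S x -> exists k, in_box (B k) x) /\
    infinite_sum (fun k => box_vol (B k)) s.

Definition vol_is (n : nat) (S : list R -> Prop) (v : R) : Prop :=
  (forall s, cover_sum n S s -> v <= s) /\
  (forall w, (forall s, cover_sum n S s -> w <= s) -> w <= v).

Definition admissible_vol (n : nat) (U : list basic_set) (v : R) : Prop :=
  alg_union U /\ vol_is n (in_union n U) v.

Definition period_in_dim (p : R) (n : nat) : Prop :=
  exists U1 U2 v1 v2,
    admissible_vol n U1 v1 /\ admissible_vol n U2 v2 /\ p = v1 - v2.

Definition real_period (p : R) : Prop :=
  exists n, (1 <= n)%nat /\ period_in_dim p n.

Definition deg_le (p : R) (n : nat) : Prop :=
  p = 0 \/ exists m, (1 <= m <= n)%nat /\ period_in_dim p m.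

Definition deg_ge (p : R) (k : nat) : Prop :=
  forall n, deg_le p n -> (k <= n)%nat.

(* Main.v *)
Require Import Defs.
From Stdlib Require Import Reals Lra Lia List Classical.
Import ListNotations.
Open Scope R_scope.

Fixpoint rsum (f : nat -> R) (n : nat) : R :=
  match n with O => 0 | S n' => rsum f n' + f n' end.

Lemma rsum_le f g n : (forall k, (k < n)%nat -> f k <= g k) -> rsum f n <= rsum g n.
Proof. induction n; simpl; intros H. lra. assert (f n <= g n) by (apply H; lia).
  assert (rsum f n <= rsum g n) by (apply IHn; intros; apply H; lia). lra. Qed.

Lemma rsum_nonneg f n : (forall k, (k < n)%nat -> 0 <= f k) -> 0 <= rsum f n.
Proof. intros H. replace 0 with (rsum (fun _ => 0) n). apply rsum_le; auto.
    clear. induction n; simpl; lra. Qed.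

Lemma rsum_ext f g n : (forall k, (k < n)%nat -> f k = g k) -> rsum f n = rsum g n.
Proof. induction n; simpl; intros H. auto. rewrite IHn, H; [auto|lia|intros; apply H; lia]. Qed.

Lemma rsum_plus f g n : rsum (fun k => f k + g k) n = rsum f n + rsum g n.
Proof. induction n; simpl; lra. Qed.

Lemma rsum_scal f x n : rsum f n * x = rsum (fun k => f k * x) n.
Proof. induction n; simpl; lra. Qed.

Lemma rsum_single f n k : (forall j, (j < n)%nat -> 0 <= f j) -> (k < n)%nat -> f k <= rsum f n.
Proof. induction n; intros H Hk. lia. simpl.
  destruct (Nat.eq_dec k n). subst. assert (0 <= rsum f n) by (apply rsum_nonneg; intros; apply H; lia). lra.
  assert (f k <= rsum f n) by (apply IHn; [intros; apply H; lia| lia]).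
  assert (0 <= f n) by (apply H; lia). lra. Qed.

Lemma rsum_sum_f f n : sum_f_R0 f n = rsum f (S n).
Proof. induction n; simpl. lra. simpl in IHn. rewrite IHn. simpl. lra. Qed.

Ltac dec := repeat match goal with |- context [Rle_dec ?x ?y] => destruct (Rle_dec x y)
   | H : context [Rle_dec ?x ?y] |- _ => destruct (Rle_dec x y) end.

Definition ind (A B W : nat -> R) (t : R) (k : nat) : R :=
  if Rle_dec (A k) t then if Rle_dec t (B k) then W k else 0 else 0.
Definition len (A B : nat -> R) (k : nat) (c d : R) : R :=
  Rmax 0 (Rmin (B k) d - Rmax (A k) c).

Lemma len_nonneg A B k c d : 0 <= len A B k c d.
Proof. unfold len. apply Rmax_l. Qed.

Lemma len_split A B k c p d : c <= p -> p <= d ->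
  len A B k c p + len A B k p d = len A B k c d.
Proof. intros. unfold len, Rmax, Rmin.
  dec; lra. Qed.

Lemma one_d m A B W : (forall k, 0 <= W k) -> forall P : list R, forall c d h, c <= d ->
  (forall k, (k < m)%nat -> (c < A k < d -> In (A k) P) /\ (c < B k < d -> In (B k) P)) ->
  (forall t, c <= t <= d -> h <= rsum (ind A B W t) m) ->
  h * (d - c) <= rsum (fun k => W k * len A B k c d) m.
Proof.
  intros HW P. induction P as [|p P IH]; intros c d h Hcd Hend HF.
  - destruct (Req_dec c d).
    + subst. replace (h*(d-d)) with 0 by ring. apply rsum_nonneg. intros.
      apply Rmult_le_pos; [apply HW|apply len_nonneg].
    + set (m0 := (c+d)/2). assert (Hm : c <= m0 <= d) by (unfold m0; lra).
      pose proof (HF m0 Hm) as H1.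
      apply Rle_trans with (rsum (ind A B W m0) m * (d - c)).
      { apply Rmult_le_compat_r; lra. }
      rewrite rsum_scal. apply rsum_le. intros k Hk.
      destruct (Hend k Hk) as [HA HB]. unfold ind.
      destruct (Rle_dec (A k) m0); [destruct (Rle_dec m0 (B k))|].
      * assert (A k <= c). { destruct (Rle_dec (A k) c); auto.
          exfalso. apply HA. unfold m0 in *; lra. }
        assert (d <= B k). { destruct (Rle_dec d (B k)); auto.
          exfalso. apply HB. unfold m0 in *; lra. }
        assert (Hlen : len A B k c d = d - c). { unfold len, Rmax, Rmin.
          dec; lra. }
        rewrite Hlen. lra.
      * rewrite Rmult_0_l. apply Rmult_le_pos; [apply HW|apply len_nonneg].
      * rewrite Rmult_0_l. apply Rmult_le_pos; [apply HW|apply len_nonneg].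
  - destruct (Rlt_dec c p); [destruct (Rlt_dec p d)|].
    + assert (H1 : h * (p - c) <= rsum (fun k => W k * len A B k c p) m).
      { apply IH. lra.
        intros k Hk. destruct (Hend k Hk) as [HA HB]. split; intros.
        - destruct (HA ltac:(lra)); [subst; lra|auto].
        - destruct (HB ltac:(lra)); [subst; lra|auto].
        - intros; apply HF; lra. }
      assert (H2 : h * (d - p) <= rsum (fun k => W k * len A B k p d) m).
      { apply IH. lra.
        intros k Hk. destruct (Hend k Hk) as [HA HB]. split; intros.
        - destruct (HA ltac:(lra)); [subst; lra|auto].
        - destruct (HB ltac:(lra)); [subst; lra|auto].
        - intros; apply HF; lra. }
      replace (rsum (fun k => W k * len A B k c d) m) with
        (rsum (fun k => W k * len A B k c p) m + rsum (fun k => W k * len A B k p d) m).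
      replace (h*(d-c)) with (h*(p-c)+h*(d-p)) by ring. lra. rewrite <- rsum_plus. apply rsum_ext. intros. rewrite <- (len_split A B k c p d) by lra. ring.
    + apply IH; auto. intros k Hk. destruct (Hend k Hk) as [HA HB]. split; intros.
      * destruct (HA H); [subst; lra|auto].
      * destruct (HB H); [subst; lra|auto].
    + apply IH; auto. intros k Hk. destruct (Hend k Hk) as [HA HB]. split; intros.
      * destruct (HA H); [subst; lra|auto].
      * destruct (HB H); [subst; lra|auto].
Qed.

Fixpoint endpts (A B : nat -> R) (m : nat) : list R :=
  match m with O => [] | S m' => A m' :: B m' :: endpts A B m' end.

Lemma endpts_in A B m k : (k < m)%nat -> In (A k) (endpts A B m) /\ In (B k) (endpts A B m).
Proof. induction m; intros; simpl. lia. destruct (Nat.eq_dec k m). subst; auto.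
  destruct IHm as [H1 H2]. lia. auto. Qed.

Lemma one_d' m A B W c d h : (forall k, 0 <= W k) -> c <= d ->
  (forall t, c <= t <= d -> h <= rsum (ind A B W t) m) ->
  h * (d - c) <= rsum (fun k => W k * len A B k c d) m.
Proof. intros. apply (one_d m A B W H (endpts A B m)); auto.
  intros k Hk; destruct (endpts_in A B m k Hk); auto. Qed.

Lemma len_le A B k c d : A k <= B k -> len A B k c d <= B k - A k.
Proof. intros. unfold len, Rmax, Rmin. dec; lra. Qed.

Lemma column_lemma (a b c d : nat -> R) M (Hcd: forall k, c k <= d k) u v hh :
  u <= v -> 0 <= hh ->
  (forall x y, u <= x <= v -> 0 <= y <= hh -> exists k, (k < M)%nat /\ a k <= x <= b k /\ c k <= y <= d k) ->
  hh * (v - u) <= rsum (fun k => (d k - c k) * len a b k u v) M.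
Proof.
  intros Huv Hh Hcov.
  apply one_d'. intros; specialize (Hcd k); lra. auto.
  intros x Hx.
  assert (H1 : 1 * (hh - 0) <= rsum (fun k => ind a b (fun _ => 1) x k * len c d k 0 hh) M).
  { apply one_d'. intros; unfold ind; dec; lra. lra.
    intros y Hy. destruct (Hcov x y Hx Hy) as [k [Hk [Hx' Hy']]].
    apply Rle_trans with (ind c d (ind a b (fun _ => 1) x) y k).
    - unfold ind; dec; lra.
    - apply rsum_single; auto. intros; unfold ind; dec; lra. }
  eapply Rle_trans. 2: apply (rsum_le (fun k => ind a b (fun _ => 1) x k * len c d k 0 hh)).
  lra. intros k Hk. pose proof (len_le c d k 0 hh (Hcd k)). pose proof (len_nonneg c d k 0 hh).
  unfold ind; dec; lra.
Qed.

Lemma two_d (a b c d : nat -> R) M (Hab: forall k, a k <= b k) (Hcd: forall k, c k <= d k)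
  x0 δ (Hδ: 0 < δ) n H (HH: forall i, 0 <= H i)
  (Hcov : forall i x y, (i < n)%nat -> x0 + INR i * δ <= x <= x0 + INR (S i) * δ -> 0 <= y <= H i ->
      exists k, (k < M)%nat /\ a k <= x <= b k /\ c k <= y <= d k) :
  rsum (fun i => δ * H i) n <= rsum (fun k => (b k - a k) * (d k - c k)) M.
Proof.
  assert (Hind : forall n', (n' <= n)%nat ->
    rsum (fun i => δ * H i) n' <= rsum (fun k => (d k - c k) * len a b k x0 (x0 + INR n' * δ)) M).
  { induction n' as [|n' IH]; intros Hn.
    - simpl. apply rsum_nonneg. intros. apply Rmult_le_pos. specialize (Hcd k); lra. apply len_nonneg.
    - simpl rsum at 1.
      assert (Hc : H n' * (x0 + INR (S n') * δ - (x0 + INR n' * δ)) <=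
         rsum (fun k => (d k - c k) * len a b k (x0 + INR n' * δ) (x0 + INR (S n') * δ)) M).
      { apply column_lemma; auto. rewrite S_INR. nra.
        intros. apply (Hcov n'); auto; lia. }
      rewrite S_INR in Hc at 1. replace (x0 + (INR n' + 1) * δ - (x0 + INR n' * δ)) with δ in Hc by ring.
      assert (IH' := IH ltac:(lia)).
      replace (rsum (fun k => (d k - c k) * len a b k x0 (x0 + INR (S n') * δ)) M) with
        (rsum (fun k => (d k - c k) * len a b k x0 (x0 + INR n' * δ)) M +
         rsum (fun k => (d k - c k) * len a b k (x0 + INR n' * δ) (x0 + INR (S n') * δ)) M).
      lra. rewrite <- rsum_plus. apply rsum_ext. intros k _.
      rewrite <- (len_split a b k x0 (x0 + INR n' * δ) (x0 + INR (S n') * δ)). ring.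
      pose proof (pos_INR n'). nra. rewrite S_INR; nra. }
  eapply Rle_trans. apply Hind. auto. apply rsum_le. intros k _.
  pose proof (len_le a b k x0 (x0 + INR n * δ) (Hab k)). specialize (Hcd k). nra.
Qed.

Lemma cover1D (G : nat -> R -> Prop) p q : p <= q ->
  (forall N M t, (N <= M)%nat -> G N t -> G M t) ->
  (forall t, p <= t <= q -> exists N δ, 0 < δ /\ forall t', Rabs (t' - t) < δ -> G N t') ->
  exists N, forall t, p <= t <= q -> G N t.
Proof.
  intros Hpq Hmono Hloc.
  set (E := fun s => p <= s <= q /\ exists N, forall t, p <= t <= s -> G N t).
  assert (Ep : E p).
  { split. lra. destruct (Hloc p ltac:(lra)) as [N [δ [Hδ HG]]]. exists N.
    intros t Ht. apply HG. replace (t - p) with 0 by lra. rewrite Rabs_R0; auto. }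
  assert (Hb : bound E). { exists q. intros s [Hs _]. lra. }
  destruct (completeness E Hb (ex_intro _ p Ep)) as [σ [Hub Hleast]].
  assert (Hpσ : p <= σ) by (apply Hub; auto).
  assert (Hσq : σ <= q) by (apply Hleast; intros s [Hs _]; lra).
  destruct (Hloc σ ltac:(lra)) as [N0 [δ [Hδ HG0]]].
  assert (Hex : exists s, E s /\ σ - δ/2 < s).
  { apply NNPP; intro Hn.
    assert (σ <= σ - δ/2). { apply Hleast. intros s Es.
      destruct (Rle_dec s (σ - δ/2)); auto. exfalso; apply Hn; exists s; split; auto; lra. }
    lra. }
  destruct Hex as [s [[Hs [N1 HG1]] Hsσ]].
  set (s' := Rmin (σ + δ/2) q).
  assert (Es' : E s').
  { split. unfold s', Rmin; dec; lra.
    exists (max N0 N1). intros t Ht.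
    destruct (Rle_dec t s).
    - apply Hmono with N1. lia. apply HG1; lra.
    - apply Hmono with N0. lia. apply HG0.
      assert (t <= σ + δ/2) by (unfold s', Rmin in Ht; dec; lra).
      unfold Rabs; destruct (Rcase_abs (t - σ)); lra. }
  assert (s' <= σ) by (apply Hub; auto).
  assert (Hq : s' = q) by (unfold s' in *; unfold Rmin in *; dec; lra).
  destruct Es' as [_ [N HN]]. exists N. intros t Ht. apply HN. lra.
Qed.

Lemma inv_S_le N M : (N <= M)%nat -> / INR (S M) <= / INR (S N).
Proof. intros. apply Rinv_le_contravar. apply lt_0_INR; lia. apply le_INR; lia. Qed.

Lemma col_compact (a b c d : nat -> R) u v hh : u <= v -> 0 <= hh ->
  (forall x y, u <= x <= v -> 0 <= y <= hh -> exists k, a k < x < b k /\ c k < y < d k) ->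
  exists N, forall x, u <= x <= v -> forall y, 0 <= y <= hh ->
    exists k, (k < N)%nat /\ a k < x < b k /\ c k < y < d k.
Proof.
  intros Huv Hh Hcov.
  apply (cover1D (fun N x => forall y, 0 <= y <= hh ->
     exists k, (k < N)%nat /\ a k < x < b k /\ c k < y < d k) u v Huv).
  - intros N M t HNM HG y Hy. destruct (HG y Hy) as [k [Hk Hk']]. exists k. split; auto. lia.
  - intros x Hx.
    destruct (cover1D (fun N y => exists k, (k < N)%nat /\ a k + / INR (S N) < x < b k - / INR (S N)
                      /\ c k < y < d k) 0 hh Hh) as [N HN].
    + intros N M t HNM [k [Hk [H1 H2]]]. exists k. pose proof (inv_S_le N M HNM).
      split. lia. split; [lra|auto].
    + intros y Hy. destruct (Hcov x y Hx Hy) as [k [Hk1 Hk2]].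
      destruct (archimed_cor1 (Rmin (x - a k) (b k - x))) as [N0 [HN0 HN0']].
      { unfold Rmin; dec; lra. }
      exists (max (S k) N0), (Rmin (y - c k) (d k - y)). split.
      { unfold Rmin; dec; lra. }
      intros y' Hy'. exists k. split. lia.
      assert (/ INR (S (max (S k) N0)) <= / INR N0).
      { apply Rinv_le_contravar. apply lt_0_INR; lia. apply le_INR; lia. }
      split. unfold Rmin in HN0; dec; lra.
      unfold Rabs, Rmin in Hy'; destruct (Rcase_abs (y' - y)); dec; lra.
    + exists N, (/ INR (S N)). split. apply Rinv_0_lt_compat, lt_0_INR; lia.
      intros x' Hx' y Hy. destruct (HN y Hy) as [k [Hk [H1 H2]]]. exists k. split; auto.
      split; [|auto]. unfold Rabs in Hx'; destruct (Rcase_abs (x' - x)); lra.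
Qed.

Lemma box2 (bx : box) : box_ok 2 bx ->
  bx = [(fst (nth 0 bx (0,0)), snd (nth 0 bx (0,0))); (fst (nth 1 bx (0,0)), snd (nth 1 bx (0,0)))]
  /\ fst (nth 0 bx (0,0)) <= snd (nth 0 bx (0,0)) /\ fst (nth 1 bx (0,0)) <= snd (nth 1 bx (0,0)).
Proof.
  intros [Hl Hf]. destruct bx as [|[a b] [|[c d] [|]]]; simpl in Hl; try discriminate.
  inversion Hf; subst. inversion H2; subst. simpl in *. auto.
Qed.

Lemma in_box2 a b c d x y : in_box [(a,b);(c,d)] [x;y] <-> a <= x <= b /\ c <= y <= d.
Proof. unfold in_box. split.
  - intros H. inversion H; subst. inversion H5; subst. simpl in *. auto.
  - intros [H1 H2]. constructor. simpl; auto. constructor. simpl; auto. constructor. Qed.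

Lemma vol2 a b c d : box_vol [(a,b);(c,d)] = (b - a) * (d - c).
Proof. unfold box_vol. simpl. ring. Qed.

Lemma geom ε N : rsum (fun k => ε / 2 ^ (S k)) N = ε - ε / 2 ^ N.
Proof. induction N. simpl; field.
  replace (rsum (fun k => ε / 2 ^ S k) (S N)) with (rsum (fun k => ε / 2 ^ S k) N + ε / 2 ^ S N) by reflexivity.
  rewrite IHN.
  assert (2 ^ N <> 0) by (apply pow_nonzero; lra). simpl. field; auto. Qed.

Lemma LB (S : list R -> Prop) n x0 δ H s : 0 < δ -> (forall i, 0 <= H i) ->
  (forall i x y, (i < n)%nat -> x0 + INR i * δ <= x <= x0 + INR (Datatypes.S i) * δ -> 0 <= y <= H i -> S [x; y]) ->
  cover_sum 2 S s -> rsum (fun i => δ * H i) n <= s.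
Proof.
  intros Hδ HH HS [B [Hok [Hcov Hsum]]].
  set (ba k := fst (nth 0 (B k) (0,0))). set (bb k := snd (nth 0 (B k) (0,0))).
  set (bc k := fst (nth 1 (B k) (0,0))). set (bd k := snd (nth 1 (B k) (0,0))).
  assert (HB : forall k, B k = [(ba k, bb k); (bc k, bd k)] /\ ba k <= bb k /\ bc k <= bd k).
  { intros k. apply box2. auto. }
  assert (Hvol : forall k, box_vol (B k) = (bb k - ba k) * (bd k - bc k)).
  { intros k. destruct (HB k) as [-> _]. apply vol2. }
  assert (Hvol0 : forall k, 0 <= box_vol (B k)).
  { intros k. rewrite Hvol. destruct (HB k) as [_ [? ?]]. nra. }
  assert (Hpart : forall N, rsum (fun k => box_vol (B k)) N <= s).
  { intros N. apply Rle_trans with (rsum (fun k => box_vol (B k)) (Datatypes.S N)).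
    simpl. specialize (Hvol0 N). lra.
    rewrite <- rsum_sum_f. apply growing_ineq; auto.
    intros m. simpl. specialize (Hvol0 (Datatypes.S m)). lra. }
  set (area := rsum (fun i => δ * H i) n).
  assert (Heps : forall ε, 0 < ε -> area <= s + ε).
  { intros ε Hε.
    set (K k := 2 * (bb k - ba k) + 2 * (bd k - bc k) + 4).
    assert (HK : forall k, 0 < K k). { intros k; destruct (HB k) as [_ [? ?]]. unfold K; lra. }
    set (r k := Rmin 1 (ε / (2 ^ Datatypes.S k * K k))).
    assert (Hp2 : forall k, 0 < 2 ^ Datatypes.S k). { intros; apply pow_lt; lra. }
    assert (Hr : forall k, 0 < r k /\ r k <= 1 /\ r k * K k <= ε / 2 ^ Datatypes.S k).
    { intros k. specialize (HK k). specialize (Hp2 k).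
      assert (0 < ε / (2 ^ Datatypes.S k * K k)).
      { apply Rdiv_lt_0_compat; auto. apply Rmult_lt_0_compat; auto. }
      assert (r k <= ε / (2 ^ Datatypes.S k * K k)) by (unfold r; apply Rmin_r).
      split. unfold r, Rmin; dec; lra. split. unfold r; apply Rmin_l.
      apply Rle_trans with (ε / (2 ^ Datatypes.S k * K k) * K k).
      apply Rmult_le_compat_r; lra. right. field. lra. }
    set (a' k := ba k - r k). set (b' k := bb k + r k).
    set (c' k := bc k - r k). set (d' k := bd k + r k).
    assert (Hstrict : forall i x y, (i < n)%nat -> x0 + INR i * δ <= x <= x0 + INR (Datatypes.S i) * δ ->
       0 <= y <= H i -> exists k, a' k < x < b' k /\ c' k < y < d' k).
    { intros i x y Hi Hx Hy. destruct (Hcov [x;y] eq_refl (HS i x y Hi Hx Hy)) as [k Hk].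
      destruct (HB k) as [Heq _]. rewrite Heq in Hk. apply in_box2 in Hk.
      exists k. destruct (Hr k) as [? _]. unfold a', b', c', d'. lra. }
    assert (HN : forall n', (n' <= n)%nat -> exists N, forall i, (i < n')%nat ->
       forall x, x0 + INR i * δ <= x <= x0 + INR (Datatypes.S i) * δ -> forall y, 0 <= y <= H i ->
       exists k, (k < N)%nat /\ a' k < x < b' k /\ c' k < y < d' k).
    { induction n' as [|n' IH]; intros Hn.
      - exists 0%nat. intros; lia.
      - destruct (IH ltac:(lia)) as [N1 HN1].
        destruct (col_compact a' b' c' d' (x0 + INR n' * δ) (x0 + INR (Datatypes.S n') * δ) (H n'))
          as [N2 HN2].
        + rewrite S_INR. nra.
        + auto.
        + intros; apply (Hstrict n'); auto; lia.
        + exists (max N1 N2). intros i Hi x Hx y Hy.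
          destruct (Nat.eq_dec i n').
          * subst. destruct (HN2 x Hx y Hy) as [k [? ?]]. exists k. split; auto. lia.
          * destruct (HN1 i ltac:(lia) x Hx y Hy) as [k [? ?]]. exists k. split; auto. lia. }
    destruct (HN n (le_n n)) as [N HNN].
    assert (H2d : area <= rsum (fun k => (b' k - a' k) * (d' k - c' k)) N).
    { apply two_d with x0; auto.
      - intros k. destruct (HB k) as [_ [? ?]]. destruct (Hr k) as [? _]. unfold a', b'. lra.
      - intros k. destruct (HB k) as [_ [? ?]]. destruct (Hr k) as [? _]. unfold c', d'. lra.
      - intros i x y Hi Hx Hy. destruct (HNN i Hi x Hx y Hy) as [k [Hk [? ?]]].
        exists k. split; auto. lra. }
    assert (Hcmp : rsum (fun k => (b' k - a' k) * (d' k - c' k)) N <=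
                   rsum (fun k => box_vol (B k) + ε / 2 ^ Datatypes.S k) N).
    { apply rsum_le. intros k _. rewrite Hvol. destruct (HB k) as [_ [? ?]].
      destruct (Hr k) as [? [? ?]]. unfold a', b', c', d', K in *.
      set (rr := r k) in *. set (D1 := bb k - ba k). set (D2 := bd k - bc k).
      assert (0 <= D1) by (unfold D1; lra). assert (0 <= D2) by (unfold D2; lra).
      replace (bb k + rr - (ba k - rr)) with (D1 + 2 * rr) by (unfold D1; ring).
      replace (bd k + rr - (bc k - rr)) with (D2 + 2 * rr) by (unfold D2; ring).
      fold D1 D2 in H4. assert (0 <= rr * (1 - rr)) by (apply Rmult_le_pos; lra).
      replace ((D1 + 2 * rr) * (D2 + 2 * rr)) with (D1 * D2 + rr * (2 * D1 + 2 * D2 + 4) - 4 * (rr * (1 - rr))) by ring. lra. }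
    rewrite rsum_plus, geom in Hcmp.
    assert (0 < ε / 2 ^ N) by (apply Rdiv_lt_0_compat; auto; apply pow_lt; lra).
    specialize (Hpart N). lra. }
  destruct (Rle_dec area s); auto.
  specialize (Heps ((area - s) / 2) ltac:(lra)). lra.
Qed.

Lemma rsum_stable f m n : (forall k, (m <= k)%nat -> f k = 0) -> (m <= n)%nat -> rsum f n = rsum f m.
Proof. intros Hf. induction n; intros Hmn.
  - replace m with 0%nat by lia. auto.
  - destruct (Nat.eq_dec m (S n)). subst; auto. simpl. rewrite IHn by lia. rewrite Hf by lia. ring. Qed.

Lemma vol_from (S : list R -> Prop) v :
  (forall ε, 0 < ε -> exists n x0 δ H, 0 < δ /\ (forall i, 0 <= H i) /\
     (forall i x y, (i < n)%nat -> x0 + INR i * δ <= x <= x0 + INR (Datatypes.S i) * δ -> 0 <= y <= H i -> S [x; y]) /\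
     v - ε <= rsum (fun i => δ * H i) n) ->
  (forall ε, 0 < ε -> exists (B : nat -> box) m, (forall k, box_ok 2 (B k)) /\
     (forall k, (m <= k)%nat -> box_vol (B k) = 0) /\
     (forall x, length x = 2%nat -> S x -> exists k, in_box (B k) x) /\
     rsum (fun k => box_vol (B k)) m <= v + ε) ->
  vol_is 2 S v.
Proof.
  intros Hlow Hup. split.
  - intros s Hs. destruct (Rle_dec v s) as [|Hn0]; auto.
    destruct (Hlow ((v - s)/2) ltac:(lra)) as [n [x0 [δ [H [Hδ [HH [HS Hv]]]]]]].
    pose proof (LB S n x0 δ H s Hδ HH HS Hs). lra.
  - intros w Hw. destruct (Rle_dec w v) as [|Hn1]; auto.
    destruct (Hup ((w - v)/2) ltac:(lra)) as [B [m [Hok [H0 [Hcov Hv]]]]].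
    assert (cover_sum 2 S (rsum (fun k => box_vol (B k)) m)).
    { exists B. split; auto. split; auto.
      intros eps Heps. exists m. intros n Hn. rewrite rsum_sum_f.
      rewrite (rsum_stable _ m (Datatypes.S n)); auto. unfold R_dist.
      replace (_ - _) with 0 by ring. rewrite Rabs_R0. auto. }
    specialize (Hw _ H). lra.
Qed.

Lemma alg_m1 : is_algebraic (-1).
Proof. exists [1%Z; 1%Z]. split. constructor; discriminate. cbn. lra. Qed.
Lemma alg_1 : is_algebraic 1.
Proof. exists [(-1)%Z; 1%Z]. split. constructor; discriminate. cbn. lra. Qed.
Lemma alg_4 : is_algebraic 4.
Proof. exists [(-4)%Z; 1%Z]. split. constructor; discriminate. cbn. lra. Qed.

Definition px : mpoly := [(1, [1%nat; 0%nat])].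
Definition py : mpoly := [(1, [0%nat; 1%nat])].
Definition pax (a : R) : mpoly := [(a, [0%nat; 0%nat]); (-1, [1%nat; 0%nat])].
Definition p1y : mpoly := [(1, [0%nat; 0%nat]); (-1, [0%nat; 1%nat])].
Definition pf : mpoly := [(4, [0%nat; 0%nat]); (-1, [0%nat; 1%nat]); (-1, [2%nat; 1%nat])].

Definition U_rect (a : R) : list basic_set := [[(px, true); (pax a, true); (py, true); (p1y, true)]].
Definition U_pi : list basic_set := [[(px, true); (pax 1, true); (py, true); (pf, true)]].

Lemma in_union_single n B pt : in_union n [B] pt <-> length pt = n /\ Forall (fun c => sat_cond c pt) B.
Proof. unfold in_union. split; intros [H1 H2]; split; auto.
  all: try (inversion H2; subst; auto; match goal with H: Exists _ [] |- _ => inversion H end).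
Qed.

Lemma forall4 {A} (P : A -> Prop) a b c d : Forall P [a;b;c;d] <-> P a /\ P b /\ P c /\ P d.
Proof. split. intros H. inversion H as [|? ? H1 H2]; subst. inversion H2 as [|? ? H3 H4]; subst.
  inversion H4 as [|? ? H5 H6]; subst. inversion H6; subst. auto.
  intros [? [? [? ?]]]. repeat constructor; auto. Qed.

Lemma len2 (pt : list R) : length pt = 2%nat -> exists x y, pt = [x; y].
Proof. destruct pt as [|x [|y [|]]]; simpl; intros H; try discriminate. eauto. Qed.

Lemma rect_mem a x y : in_union 2 (U_rect a) [x; y] <-> 0 <= x <= a /\ 0 <= y <= 1.
Proof. unfold U_rect. rewrite in_union_single, forall4. unfold sat_cond, px, pax, py, p1y. cbn. split.
  - intros [_ [? [? [? ?]]]]. lra.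
  - intros. repeat split; lra. Qed.

Definition fq (x : R) := 4 / (1 + x ^ 2).

Lemma pi_mem x y : in_union 2 U_pi [x; y] <-> 0 <= x <= 1 /\ 0 <= y /\ y <= fq x.
Proof. unfold U_pi. rewrite in_union_single, forall4. unfold sat_cond, px, pax, py, pf, fq. cbn.
  assert (0 < 1 + x * x) by nra.
  split.
  - intros [_ [? [? [? ?]]]]. repeat split; try lra.
    replace (4 / (1 + x * (x * 1))) with (4 * / (1 + x * x)) by (unfold Rdiv; f_equal; f_equal; ring).
    apply Rmult_le_reg_r with (1 + x * x). auto. rewrite Rmult_assoc, Rinv_l by lra. nra.
  - intros [? [? ?]]. split; auto. repeat split; try lra.
    assert (Hy4 : y * (1 + x * x) <= 4 / (1 + x * (x * 1)) * (1 + x * x)) by (apply Rmult_le_compat_r; lra).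
    replace (4 / (1 + x * (x * 1)) * (1 + x * x)) with 4 in Hy4 by (field; lra). nra.
Qed.

Lemma rect_vol a : 0 < a -> vol_is 2 (in_union 2 (U_rect a)) a.
Proof.
  intros Ha. apply vol_from.
  - intros ε Hε. exists 1%nat, 0, a, (fun _ => 1). split; auto. split. intros; lra. split.
    + intros i x y Hi Hx Hy. replace i with 0%nat in Hx by lia. simpl in Hx.
      apply rect_mem. lra.
    + simpl. lra.
  - intros ε Hε. exists (fun k => match k with O => [(0,a);(0,1)] | _ => [(0,0);(0,0)] end), 1%nat.
    split; [|split; [|split]].
    + intros [|k]; split; auto; repeat constructor; simpl; lra.
    + intros [|k] Hk. lia. unfold box_vol; simpl; ring.
    + intros pt Hl Hpt. destruct (len2 pt Hl) as [x [y ->]]. apply rect_mem in Hpt.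
      exists 0%nat. apply in_box2. lra.
    + simpl. unfold box_vol; simpl. lra.
Qed.

Lemma atan_bounds a b : 0 <= a < b -> (b - a) * fq b <= 4 * (atan b - atan a) <= (b - a) * fq a.
Proof.
  intros Hab.
  destruct (MVT_cor2 atan (fun x => / (1 + x ^ 2)) a b ltac:(lra) (fun c _ => derivable_pt_lim_atan c))
    as [c [Hc Hc']].
  rewrite Hc. unfold fq, Rdiv.
  assert (/ (1 + b ^ 2) <= / (1 + c ^ 2)) by (apply Rinv_le_contravar; nra).
  assert (/ (1 + c ^ 2) <= / (1 + a ^ 2)) by (apply Rinv_le_contravar; nra).
  split; nra.
Qed.

Lemma tele g n : rsum (fun i => g (S i) - g i) n = g n - g 0%nat.
Proof. induction n; simpl. ring. rewrite IHn. ring. Qed.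

Lemma find_int n δ x : (1 <= n)%nat -> 0 < δ -> 0 <= x <= INR n * δ ->
  exists i, (i < n)%nat /\ INR i * δ <= x <= INR (S i) * δ.
Proof.
  intros Hn Hδ. induction n as [|m IH]. lia. intros Hx.
  destruct (Nat.eq_dec m 0). subst. exists 0%nat. split. lia. simpl in *. lra.
  destruct (Rle_dec x (INR m * δ)).
  - destruct IH as [i [Hi Hi']]. lia. pose proof (pos_INR m). nra. exists i; split; auto; lia.
  - exists m. split. lia. lra.
Qed.

Lemma fq_pos x : 0 < fq x.
Proof. unfold fq. apply Rdiv_lt_0_compat. lra. nra. Qed.

Lemma fq_dec x y : 0 <= x <= y -> fq y <= fq x.
Proof. intros. unfold fq, Rdiv. apply Rmult_le_compat_l. lra. apply Rinv_le_contravar; nra. Qed.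

Lemma pi_vol : vol_is 2 (in_union 2 U_pi) PI.
Proof.
  assert (Hmain : forall n, (1 <= n)%nat ->
    let δ := / INR n in
    rsum (fun i => δ * fq (INR (S i) * δ)) n <= PI <= rsum (fun i => δ * fq (INR i * δ)) n /\
    rsum (fun i => δ * fq (INR i * δ)) n = rsum (fun i => δ * fq (INR (S i) * δ)) n + 2 * δ).
  { intros n Hn δ.
    assert (Hδ : 0 < δ) by (apply Rinv_0_lt_compat, lt_0_INR; lia).
    assert (Hnd : INR n * δ = 1) by (apply Rinv_r; apply not_0_INR; lia).
    assert (Hmid : rsum (fun i => 4 * atan (INR (S i) * δ) - 4 * atan (INR i * δ)) n = PI).
    { rewrite (tele (fun i => 4 * atan (INR i * δ))). rewrite Hnd. simpl. rewrite Rmult_0_l, atan_0, atan_1. field. }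
    split. split.
    - rewrite <- Hmid. apply rsum_le. intros i _.
      pose proof (atan_bounds (INR i * δ) (INR (S i) * δ)) as Hb.
      rewrite S_INR in *. pose proof (pos_INR i).
      replace ((INR i + 1) * δ - INR i * δ) with δ in Hb by ring.
      assert (0 <= INR i * δ < (INR i + 1) * δ) by nra. specialize (Hb H0). lra.
    - rewrite <- Hmid. apply rsum_le. intros i _.
      pose proof (atan_bounds (INR i * δ) (INR (S i) * δ)) as Hb.
      rewrite S_INR in *. pose proof (pos_INR i).
      replace ((INR i + 1) * δ - INR i * δ) with δ in Hb by ring.
      assert (0 <= INR i * δ < (INR i + 1) * δ) by nra. specialize (Hb H0). lra.
    - assert (Ht := tele (fun i => - (δ * fq (INR i * δ))) n). cbv beta in Ht. change (INR 0) with 0 in Ht.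
      rewrite Hnd, Rmult_0_l in Ht.
      assert (fq 0 = 4) by (unfold fq; field). assert (fq 1 = 2) by (unfold fq; field).
      rewrite H, H0 in Ht.
      replace (rsum (fun i => δ * fq (INR i * δ)) n) with
        (rsum (fun i => δ * fq (INR (S i) * δ)) n + rsum (fun i => - (δ * fq (INR (S i) * δ)) - - (δ * fq (INR i * δ))) n).
      rewrite Ht. ring.
      rewrite <- rsum_plus. apply rsum_ext. intros. ring. }
  apply vol_from.
  - intros ε Hε. destruct (archimed_cor1 (ε/2) ltac:(lra)) as [n [Hn Hn']].
    destruct (Hmain n ltac:(lia)) as [[HL HU] HE].
    set (δ := / INR n) in *.
    assert (Hδ : 0 < δ) by (apply Rinv_0_lt_compat, lt_0_INR; lia).
    assert (Hnd : INR n * δ = 1) by (apply Rinv_r; apply not_0_INR; lia).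
    exists n, 0, δ, (fun i => fq (INR (S i) * δ)). split; auto. split.
    intros; left; apply fq_pos. split.
    + intros i x y Hi Hx Hy. apply pi_mem. pose proof (pos_INR i).
      assert (INR (S i) * δ <= 1). { rewrite <- Hnd. apply Rmult_le_compat_r. lra. apply le_INR; lia. }
      split. nra. split. lra. eapply Rle_trans. apply Hy. apply fq_dec. nra.
    + lra.
  - intros ε Hε. destruct (archimed_cor1 (ε/2) ltac:(lra)) as [n [Hn Hn']].
    destruct (Hmain n ltac:(lia)) as [[HL HU] HE].
    set (δ := / INR n) in *.
    assert (Hδ : 0 < δ) by (apply Rinv_0_lt_compat, lt_0_INR; lia).
    assert (Hnd : INR n * δ = 1) by (apply Rinv_r; apply not_0_INR; lia).
    exists (fun k => if Nat.ltb k n then [(INR k * δ, INR (S k) * δ); (0, fq (INR k * δ))] else [(0,0);(0,0)]), n.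
    split; [|split; [|split]].
    + intros k. assert (INR k * δ <= INR (S k) * δ) by (rewrite S_INR; lra).
      pose proof (fq_pos (INR k * δ)).
      destruct (Nat.ltb k n); split; auto; repeat (constructor; cbn [fst snd]; try lra).
    + intros k Hk. replace (Nat.ltb k n) with false. unfold box_vol; simpl; ring.
      symmetry. apply Nat.ltb_ge. auto.
    + intros pt Hl Hpt. destruct (len2 pt Hl) as [x [y ->]]. apply pi_mem in Hpt.
      destruct (find_int n δ x ltac:(lia) Hδ ltac:(lra)) as [i [Hi Hi']].
      exists i. replace (Nat.ltb i n) with true by (symmetry; apply Nat.ltb_lt; auto).
      apply in_box2. split. auto. split. lra. eapply Rle_trans. apply Hpt. apply fq_dec.
      pose proof (pos_INR i). nra.
    + rewrite (rsum_ext _ (fun i => δ * fq (INR i * δ))). lra.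
      intros k Hk. replace (Nat.ltb k n) with true by (symmetry; apply Nat.ltb_lt; auto).
      rewrite vol2. rewrite S_INR. ring.
Qed.

Theorem corollary5p4 : deg_ge (exp 1) 3 -> transcendental (exp 1 + PI).
Proof.
  intros Hdeg Halg.
  assert (Hpos : 0 < exp 1 + PI) by (pose proof (exp_pos 1); pose proof PI_RGT_0; lra).
  assert (Hp : period_in_dim (exp 1) 2).
  { exists (U_rect (exp 1 + PI)), U_pi, (exp 1 + PI), PI.
    split; [|split].
    - split. 2: apply rect_vol; auto.
      unfold alg_union, U_rect, mpoly_alg_coeffs, px, pax, py, p1y.
      repeat constructor; cbn [fst]; auto using alg_1, alg_m1.
    - split. 2: apply pi_vol.
      unfold alg_union, U_pi, mpoly_alg_coeffs, px, pax, py, pf.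
      repeat constructor; cbn [fst]; auto using alg_1, alg_m1, alg_4.
    - ring. }
  assert (H3 := Hdeg 2%nat (or_intror (ex_intro _ 2%nat (conj (conj (le_n_S _ _ (le_0_n 1)) (le_n 2)) Hp)))).
  lia.
Qed.
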